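(* Let $V$ be a subset of $\mathbb{R}^n$ and $W$ a nonempty subset of $\mathbb{R}^m$. Let $f_1,\ldots,f_n\in\overline{\boldsymbol{T}(Y_1,\ldots,Y_m)}/\boldsymbol{E}(W)$ and suppose that the image of $\theta:W\to\boldsymbol{T}^n$, $y\mapsto(f_1(y),\ldots,f_n(y))$, is contained in $V$. Let $\theta^\ast:\overline{\boldsymbol{T}(X_1,\ldots,X_n)}/\boldsymbol{E}(V)\to F(W,\boldsymbol{T})$, $f\mapsto f\circ\theta$. Then: (1) $V\neq\varnothing$; (2) $\operatorname{Im}(\theta^\ast)\subset\overline{\boldsymbol{T}(Y_1,\ldots,Y_m)}/\boldsymbol{E}(W)\subset F(W,\boldsymbol{T})$; (3) $\theta^\ast$ is a $\boldsymbol{T}$-algebra homomorphism; (4) if $\operatorname{Im}(\theta)\supset V$, then $\theta^\ast$ is injective; (5) if $V$ and $W$ are homeomorphic via $\theta$ and there exist $g_1,\ldots,g_m\in\overline{\boldsymbol{T}(X_1,\ldots,X_n)}/\boldsymbol{E}(V)$ such that $\theta^{-1}(x)=(g_1(x),\ldots,g_m(x))$ for all $x\in V$, then $\overline{\boldsymbol{T}(X_1,\ldots,X_n)}/\boldsymbol{E}(V)$ and $\overline{\boldsymbol{T}(Y_1,\ldots,Y_m)}/\boldsymbol{E}(W)$ are isomorphic via $\theta^\ast$.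
   Context: $\boldsymbol{T}=\mathbb{R}\cup\{-\infty\}$ with $a\oplus b=\max\{a,b\}$, $a\odot b=a+b$. Semirings are commutative with $0,1$; $\boldsymbol{T}$-algebras are semirings with a semiring homomorphism from $\boldsymbol{T}$, and $\boldsymbol{T}$-algebra homomorphisms are compatible semiring homomorphisms (isomorphism = bijective one). $\overline{\boldsymbol{T}[X_1,\ldots,X_n]}$ is the tropical polynomial semiring modulo identifying polynomials defining the same function $\boldsymbol{T}^n\to\boldsymbol{T}$; it is cancellative and $\overline{\boldsymbol{T}(X_1,\ldots,X_n)}$ is its semifield of fractions. Each element defines a function $\mathbb{R}^n\to\boldsymbol{T}$ (quotients evaluated as differences). For $V\subset\mathbb{R}^n$, $\boldsymbol{E}(V)=\{(f,g)\mid f(x)=g(x)\ \forall x\in V\}$ is a congruence (an equivalence relation compatible with both operations) on $\overline{\boldsymbol{T}(X_1,\ldots,X_n)}$, and an element of the quotient $\overline{\boldsymbol{T}(X_1,\ldots,X_n)}/\boldsymbol{E}(V)$ is evaluated at $x\in V$ via any representative (well defined), so it defines a function $V\to\boldsymbol{T}$. $F(W,\boldsymbol{T})$ is the $\boldsymbol{T}$-algebra of all functions $W\to\boldsymbol{T}$ with pointwise operations, and $\overline{\boldsymbol{T}(Y_1,\ldots,Y_m)}/\boldsymbol{E}(W)$ is regarded as a subset of it via evaluation. *)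

(* Defs.v *)
From HB Require Import structures.
From mathcomp Require Import all_boot all_order all_algebra.
From mathcomp Require Import all_classical all_reals all_analysis.
From mathcomp Require Import Rstruct Rstruct_topology.
Set Implicit Arguments. Unset Strict Implicit. Unset Printing Implicit Defensive.
Import Order.TTheory GRing.Theory Num.Theory.
Local Open Scope classical_set_scope.
Local Open Scope ring_scope.

Notation RR := Rdefinitions.R.

(** The tropical semifield T = R ∪ {-oo}; [None] is -oo. *)
Definition T := option RR.

Definition tadd (a b : T) : T :=
  match a, b with
  | None, _ => b
  | _, None => a
  | Some x, Some y => Some (Num.max x y)
  end.

Definition tmul (a b : T) : T :=
  match a, b with
  | Some x, Some y => Some (x + y)
  | _, _ => None
  end.

(** A tropical monomial c ⊙ X^a (c real, a ∈ N^n) and a tropical polynomial,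
    given as a finite list of monomials (the empty list is the zero polynomial -oo). *)
Definition tmono (n : nat) := (RR * {ffun 'I_n -> nat})%type.
Definition tpoly (n : nat) := seq (tmono n).

Definition mono_eval n (t : tmono n) (x : 'rV[RR]_n) : RR :=
  t.1 + \sum_(i < n) (t.2 i)%:R * x ord0 i.

Definition peval n (p : tpoly n) (x : 'rV[RR]_n) : T :=
  foldr (fun t acc => tadd (Some (mono_eval t x)) acc) None p.

(** A representative p/q of an element of the semifield of fractions of
    \overline{T[X_1..X_n]}: the denominator q is a nonzero polynomial. *)
Record trat (n : nat) := Trat {
  tnum : tpoly n;
  tden : tpoly n;
  tden_nz : tden <> [::] }.

Definition reval n (r : trat n) (x : 'rV[RR]_n) : T :=
  match peval (tnum r) x, peval (tden r) x with
  | Some a, Some b => Some (a - b)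
  | _, _ => None
  end.

(** \overline{T(X_1..X_n)}/E(V), realised (via evaluation, which is injective on
    the quotient by definition of E(V)) as a subset of F(V,T) = (V -> T). *)
Definition QT n (V : set 'rV[RR]_n) : set (V -> T) :=
  [set h | exists r : trat n, forall x : V, h x = reval r (\val x)].

Definition fadd (A : Type) (h h' : A -> T) (x : A) : T := tadd (h x) (h' x).
Definition fmul (A : Type) (h h' : A -> T) (x : A) : T := tmul (h x) (h' x).
Definition fconst (A : Type) (c : T) (x : A) : T := c.
Arguments QT {n} V _ : assert.
Arguments fconst A c x : clear implicits.
Arguments fadd {A} h h' _.
Arguments fmul {A} h h' _.

(* Main.v *)
Require Import Defs.
From HB Require Import structures.
From mathcomp Require Import all_boot all_order all_algebra.
From mathcomp Require Import all_classical all_reals all_analysis.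
From mathcomp Require Import Rstruct Rstruct_topology lra.
Import Order.TTheory GRing.Theory Num.Theory.
Local Open Scope classical_set_scope.
Local Open Scope ring_scope.
Set Implicit Arguments. Unset Strict Implicit.

Lemma maxD (a b c : RR) : Num.max a b + c = Num.max (a+c) (b+c).
Proof. rewrite !maxEle. case: (leP a b); case: (leP (a+c) (b+c)); lra. Qed.

Definition monomul {k} (s t : tmono k) : tmono k :=
  (s.1 + t.1, [ffun i => (s.2 i + t.2 i)%N]).

Fixpoint pmul {k} (p q : tpoly k) : tpoly k :=
  match p with [::] => [::] | s :: p' => map (monomul s) q ++ pmul p' q end.

Lemma mono_eval_mul k (s t : tmono k) x :
  mono_eval (monomul s t) x = mono_eval s x + mono_eval t x.
Proof.
rewrite /mono_eval /=.
under eq_bigr do rewrite ffunE natrD mulrDl.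
rewrite big_split /=. lra.
Qed.

Lemma tadd_assoc a b c : tadd (tadd a b) c = tadd a (tadd b c).
Proof. case: a; case: b; case: c => //= x y z; by rewrite maxA. Qed.

Lemma peval_cons k (t : tmono k) p x : peval (t :: p) x = tadd (Some (mono_eval t x)) (peval p x).
Proof. by []. Qed.

Lemma peval_cat k (p q : tpoly k) x : peval (p ++ q) x = tadd (peval p x) (peval q x).
Proof. elim: p => [|t p IH] //. by rewrite cat_cons !peval_cons IH tadd_assoc. Qed.

Lemma peval_map k (s : tmono k) q x :
  peval (map (monomul s) q) x = tmul (Some (mono_eval s x)) (peval q x).
Proof.
elim: q => [|t q IH] //. rewrite map_cons !peval_cons IH mono_eval_mul.
case: (peval q x) => [v|] //=. congr Some.
rewrite !maxEle. case: (leP (mono_eval t x) v); case: (leP (mono_eval s x + mono_eval t x) (mono_eval s x + v)); lra.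
Qed.

Lemma peval_mul k (p q : tpoly k) x : peval (pmul p q) x = tmul (peval p x) (peval q x).
Proof.
elim: p => [|s p IH] //. have -> : pmul (s :: p) q = map (monomul s) q ++ pmul p q by []. rewrite peval_cat peval_map IH peval_cons.
case: (peval p x) => [a|]; case: (peval q x) => [b|] //=.
congr Some; by rewrite maxD.
Qed.

Lemma peval_some k (p : tpoly k) x : p <> [::] -> exists v, peval p x = Some v.
Proof.
case: p => // t p _ /=. case: (peval p x) => /=; eauto.
Qed.

Lemma peval_nil k (p : tpoly k) x : peval p x = None -> p = [::].
Proof. case: p => //= t p. by case: (peval p x). Qed.

Lemma pmul_nz k (p q : tpoly k) : p <> [::] -> q <> [::] -> pmul p q <> [::].
Proof. by case: p => // s p _; case: q. Qed.

Lemma mono_eval_const k c (x : 'rV[RR]_k) : mono_eval (c, [ffun => 0%N]) x = c.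
Proof.
rewrite /mono_eval /=. under eq_bigr do rewrite ffunE mul0r.
by rewrite big1 ?addr0.
Qed.

Section QTW.
Variables (m : nat) (W : set 'rV[RR]_m).

Lemma QT_ext (g g' : W -> T) : (forall y, g y = g' y) -> QT W g -> QT W g'.
Proof. move=> E [r Hr]; exists r => y. by rewrite -E. Qed.

Definition one_poly : tpoly m := [:: (0, [ffun => 0%N])].
Lemma one_poly_nz : one_poly <> [::]. Proof. by []. Qed.

Lemma QT_const c : QT W (fun _ => Some c).
Proof.
exists (Trat [:: (c, [ffun => 0%N])] one_poly_nz) => y.
rewrite /reval /= !mono_eval_const. by rewrite subr0.
Qed.

Lemma QT_none : QT W (fun _ => None).
Proof. by exists (Trat [::] one_poly_nz). Qed.

Lemma QT_add g1 g2 : QT W g1 -> QT W g2 -> QT W (fun y => tadd (g1 y) (g2 y)).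
Proof.
move=> [[p1 q1 h1] H1] [[p2 q2 h2] H2].
exists (Trat (pmul p1 q2 ++ pmul p2 q1) (pmul_nz h1 h2)) => y.
rewrite H1 H2 /reval /= peval_cat !peval_mul.
have [b ->] := peval_some (\val y) h1.
have [d ->] := peval_some (\val y) h2.
case: (peval p1 (\val y)) => [a|]; case: (peval p2 (\val y)) => [c|] //=; congr Some; try lra.
rewrite !maxEle. case: (leP (a - b) (c - d)); case: (leP (a + d) (c + b)); lra.
Qed.

Lemma QT_mul g1 g2 : QT W g1 -> QT W g2 -> QT W (fun y => tmul (g1 y) (g2 y)).
Proof.
move=> [[p1 q1 h1] H1] [[p2 q2 h2] H2].
exists (Trat (pmul p1 p2) (pmul_nz h1 h2)) => y.
rewrite H1 H2 /reval /= !peval_mul.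
have [b ->] := peval_some (\val y) h1.
have [d ->] := peval_some (\val y) h2.
case: (peval p1 (\val y)); case: (peval p2 (\val y)) => //= c a; congr Some; lra.
Qed.

Lemma QT_div g1 g2 : (exists y0 : W, True) -> QT W g1 -> QT W g2 ->
  (forall y, g2 y <> None) ->
  QT W (fun y => match g1 y, g2 y with Some a, Some b => Some (a - b) | _, _ => None end).
Proof.
move=> [y0 _] [[p1 q1 h1] H1] [[p2 q2 h2] H2] Hn.
have hp2 : p2 <> [::].
  move=> E; apply: (Hn y0); by rewrite H2 /reval /= E.
exists (Trat (pmul p1 q2) (pmul_nz h1 hp2)) => y.
rewrite H1 H2 /reval /= !peval_mul.
have [b ->] := peval_some (\val y) h1.
have [d ->] := peval_some (\val y) h2.
have [c ->] := peval_some (\val y) hp2.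
case: (peval p1 (\val y)) => //= a; congr Some; lra.
Qed.

Lemma QT_natmul k (g : W -> RR) : QT W (fun y => Some (g y)) ->
  QT W (fun y => Some (k%:R * g y)).
Proof.
move=> H. elim: k => [|k IH].
  apply: QT_ext (QT_const 0) => y. by rewrite mul0r.
apply: QT_ext (QT_mul H IH) => y /=. by rewrite mulrS mulrDl mul1r.
Qed.

Lemma QT_sum k (s : seq 'I_k) (G : 'I_k -> W -> RR) :
  (forall i, QT W (fun y => Some (G i y))) ->
  QT W (fun y => Some (\sum_(i <- s) G i y)).
Proof.
move=> H. elim: s => [|i s IH].
  apply: QT_ext (QT_const 0) => y. by rewrite big_nil.
apply: QT_ext (QT_mul (H i) IH) => y /=. by rewrite big_cons.
Qed.

End QTW.

Lemma QT_subst (n m : nat) (V : set 'rV[RR]_n) (W : set 'rV[RR]_m)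
    (f : 'I_n -> trat m) (theta : W -> V) :
  W !=set0 ->
  (forall (y : W) (i : 'I_n), reval (f i) (\val y) = Some (\val (theta y) ord0 i)) ->
  forall h, QT V h -> QT W (h \o theta).
Proof.
move=> [y0 Wy0] Hf h [[N D hD] Hh].
have ex0 : exists y : W, True by exists (exist _ y0 (mem_set Wy0)).
have Hc : forall i, QT W (fun y => Some (\val (theta y) ord0 i)).
  move=> i; exists (f i) => y; by rewrite Hf.
have Hmono : forall t : tmono n, QT W (fun y => Some (mono_eval t (\val (theta y)))).
  move=> t. have H1 := QT_const W t.1.
  have H2 : QT W (fun y => Some (\sum_(i <- index_enum 'I_n) (t.2 i)%:R * \val (theta y) ord0 i)).
    apply: QT_sum => i. exact: QT_natmul.
  by apply: QT_ext (QT_mul H1 H2) => y.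
have Hp : forall p : tpoly n, QT W (fun y => peval p (\val (theta y))).
  elim=> [|t p IH]; first exact: QT_none.
  exact: QT_add (Hmono t) IH.
apply: QT_ext (QT_div ex0 (Hp N) (Hp D) _) => [y|y].
  by rewrite /= Hh /reval.
have [v ->] := peval_some (\val (theta y)) hD. by [].
Qed.

Theorem proposition3p21 (n m : nat) (V : set 'rV[RR]_n) (W : set 'rV[RR]_m)
    (f : 'I_n -> trat m) (theta : W -> V) :
  W !=set0 ->
  (* theta(y) = (f_1(y),...,f_n(y)), and its image is contained in V *)
  (forall (y : W) (i : 'I_n), reval (f i) (\val y) = Some (\val (theta y) ord0 i)) ->
  let thstar := fun h : V -> T => h \o theta in
  [/\ (* (1) *) V !=set0,
      (* (2) *) (forall h, QT V h -> QT W (thstar h)),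
      (* (3) *) [/\ forall c : T, thstar (fconst V c) = fconst W c,
                    forall h h', QT V h -> QT V h' ->
                      thstar (fadd h h') = fadd (thstar h) (thstar h')
                  & forall h h', QT V h -> QT V h' ->
                      thstar (fmul h h') = fmul (thstar h) (thstar h')],
      (* (4) *) ((forall x : V, exists y : W, theta y = x) ->
                 forall h h', QT V h -> QT V h' -> thstar h = thstar h' -> h = h')
    & (* (5) *) ((exists (psi : V -> W) (g : 'I_m -> trat n),
                   [/\ cancel theta psi, cancel psi theta,
                       continuous theta, continuous psi
                     & forall (x : V) (j : 'I_m),
                         reval (g j) (\val x) = Some (\val (psi x) ord0 j)]) ->
                 [/\ forall h, QT V h -> QT W (thstar h),
                     forall h h', QT V h -> QT V h' -> thstar h = thstar h' -> h = h'
                   & forall k, QT W k -> exists2 h, QT V h & thstar h = k])].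
Proof.
move=> W0 Hf thstar.
have VN : V !=set0.
  case: W0 => y0 Wy0. exists (\val (theta (exist _ y0 (mem_set Wy0)))).
  exact: set_mem (valP _).
have P2 : forall h, QT V h -> QT W (thstar h) by move=> h; exact: QT_subst W0 Hf h.
have P4 : (forall x : V, exists y : W, theta y = x) ->
    forall h h', QT V h -> QT V h' -> thstar h = thstar h' -> h = h'.
  move=> Hs h h' _ _ E; apply: funext => x; have [y <-] := Hs x.
  exact: (congr1 (fun F => F y) E).
split => //.
move=> [psi [g [c1 c2 _ _ Hg]]]; split => //.
  - apply: P4 => x. exists (psi x). by rewrite c2.
  - move=> k Hk. exists (k \o psi); first exact: QT_subst VN Hg k Hk.
    apply: funext => y. by rewrite /thstar /= c1.
Qed.
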